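(* For every $n\in\mathbb{N}_0$ and $m=1,\ldots,n+1$, \begin{align*} \mathbf{X}^{0,\dagger}_n&=r^n\Big[\tfrac{n+1}{2}U^0_n+\tfrac12U^1_n\mathbf{e}_1+\tfrac12V^1_n\mathbf{e}_2\Big],\\ \mathbf{X}^{m,\dagger}_n&=r^n\Big[\tfrac{n+m+1}{2}U^m_n+\tfrac14R^{m,-}_n\mathbf{e}_1+\tfrac14S^{m,+}_n\mathbf{e}_2\Big],\\ \mathbf{Y}^{m,\dagger}_n&=r^n\Big[\tfrac{n+m+1}{2}V^m_n+\tfrac14S^{m,-}_n\mathbf{e}_1-\tfrac14R^{m,+}_n\mathbf{e}_2\Big], \end{align*} where $R^{m,\pm}_n=U^{m+1}_n\pm(n+m+1)(n+m)U^{m-1}_n$ and $S^{m,\pm}_n=V^{m+1}_n\pm(n+m+1)(n+m)V^{m-1}_n$.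
   Context: Quaternions $\mathbb{H}$ have basis $1,\mathbf{e}_1,\mathbf{e}_2,\mathbf{e}_3$ with $\mathbf{e}_i^2=-1$, $\mathbf{e}_1\mathbf{e}_2=\mathbf{e}_3=-\mathbf{e}_2\mathbf{e}_1$, $\mathbf{e}_2\mathbf{e}_3=\mathbf{e}_1=-\mathbf{e}_3\mathbf{e}_2$, $\mathbf{e}_3\mathbf{e}_1=\mathbf{e}_2=-\mathbf{e}_1\mathbf{e}_3$. Reduced quaternions: $\mathcal{A}=\mathrm{span}_\mathbb{R}\{1,\mathbf{e}_1,\mathbf{e}_2\}$; $x=(x_0,x_1,x_2)\in\mathbb{R}^3$ is identified with $x_0+x_1\mathbf{e}_1+x_2\mathbf{e}_2$. $\overline{D}=\partial_{x_0}-\mathbf{e}_1\partial_{x_1}-\mathbf{e}_2\partial_{x_2}$. Spherical coordinates: $x_0=r\cos\theta_1$, $x_1=r\sin\theta_1\cos\theta_2$, $x_2=r\sin\theta_1\sin\theta_2$, $r>0$, $0<\theta_1\le\pi$, $0<\theta_2\le2\pi$. $P_n$ is the Legendre polynomial, $P^m_n(t)=(1-t^2)^{m/2}\frac{d^m}{dt^m}P_n(t)$ the associated Legendre function ($P^0_n=P_n$), with $P^i_n\equiv0$ for $i\ge n+1$. $T_k$, $U_k$ are the Chebyshev polynomials of the first and second kind, with $U_{-1}=0$. Spherical harmonics: $U^l_{n}(\theta_1,\theta_2)=P^l_{n}(\cos\theta_1)T_l(\cos\theta_2)$, $V^m_{n}(\theta_1,\theta_2)=P^m_{n}(\cos\theta_1)\sin\theta_2\,U_{m-1}(\cos\theta_2)$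 (so $V^0_n=0$), and $U^l_n=V^l_n=0$ for $l\ge n+1$. The basis polynomials are $\mathbf{X}^{l,\dagger}_n:=\tfrac12\overline{D}\big(r^{n+1}U^l_{n+1}\big)$, $l=0,\ldots,n+1$, and $\mathbf{Y}^{m,\dagger}_n:=\tfrac12\overline{D}\big(r^{n+1}V^m_{n+1}\big)$, $m=1,\ldots,n+1$. *)

(* Defs.v *)
From Stdlib Require Import Reals Lra Arith.
Open Scope R_scope.

Record quat := mkQ { q0 : R; q1 : R; q2 : R; q3 : R }.

Definition qR (a : R) : quat := mkQ a 0 0 0.
Definition e1 : quat := mkQ 0 1 0 0.
Definition e2 : quat := mkQ 0 0 1 0.
Definition e3 : quat := mkQ 0 0 0 1.

Definition qadd (a b : quat) : quat :=
  mkQ (q0 a + q0 b) (q1 a + q1 b) (q2 a + q2 b) (q3 a + q3 b).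
Definition qopp (a : quat) : quat := mkQ (- q0 a) (- q1 a) (- q2 a) (- q3 a).
Definition qsub (a b : quat) : quat := qadd a (qopp b).
(* Hamilton product: e1 e2 = e3, e2 e3 = e1, e3 e1 = e2, ei^2 = -1 *)
Definition qmul (a b : quat) : quat :=
  mkQ (q0 a * q0 b - q1 a * q1 b - q2 a * q2 b - q3 a * q3 b)
      (q0 a * q1 b + q1 a * q0 b + q2 a * q3 b - q3 a * q2 b)
      (q0 a * q2 b - q1 a * q3 b + q2 a * q0 b + q3 a * q1 b)
      (q0 a * q3 b + q1 a * q2 b - q2 a * q1 b + q3 a * q0 b).
Definition qscale (s : R) (a : quat) : quat := qmul (qR s) a.

Definition pt := (R * R * R)%type.
Definition px0 (x : pt) : R := fst (fst x).
Definition px1 (x : pt) : R := snd (fst x).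
Definition px2 (x : pt) : R := snd x.

Definition shift (x : pt) (i : nat) (t : R) : pt :=
  match i with
  | O => (px0 x + t, px1 x, px2 x)
  | 1%nat => (px0 x, px1 x + t, px2 x)
  | _ => (px0 x, px1 x, px2 x + t)
  end.

Definition has_pderiv (f : pt -> quat) (x : pt) (i : nat) (d : quat) : Prop :=
  derivable_pt_lim (fun t => q0 (f (shift x i t))) 0 (q0 d) /\
  derivable_pt_lim (fun t => q1 (f (shift x i t))) 0 (q1 d) /\
  derivable_pt_lim (fun t => q2 (f (shift x i t))) 0 (q2 d) /\
  derivable_pt_lim (fun t => q3 (f (shift x i t))) 0 (q3 d).

Definition has_Dbar (f : pt -> quat) (x : pt) (v : quat) : Prop :=
  exists d0 d1 d2 : quat,
    has_pderiv f x 0 d0 /\ has_pderiv f x 1 d1 /\ has_pderiv f x 2 d2 /\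
    v = qsub (qsub d0 (qmul e1 d1)) (qmul e2 d2).

(* coefficient of t^j in P_n :
   P_n(t) = 2^{-n} sum_k (-1)^k C(n,k) C(2n-2k,n) t^{n-2k} *)
Definition leg_coef (n j : nat) : R :=
  if andb (j <=? n)%nat (Nat.even (n - j)) then
    let k := ((n - j) / 2)%nat in
    (-1) ^ k * C n k * C (2 * n - 2 * k) n / 2 ^ n
  else 0.

Definition legendre (n : nat) (t : R) : R :=
  sum_f_R0 (fun j => leg_coef n j * t ^ j) n.

Definition legendre_deriv (n m : nat) (t : R) : R :=
  sum_f_R0 (fun j => if (m <=? j)%nat then
                       leg_coef n j * (INR (fact j) / INR (fact (j - m))) * t ^ (j - m)
                     else 0) n.

Definition assoc_legendre (n m : nat) (t : R) : R :=
  (sqrt (1 - t ^ 2)) ^ m * legendre_deriv n m t.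

Fixpoint chebT (k : nat) (c : R) : R :=
  match k with
  | O => 1
  | S k' => match k' with
            | O => c
            | S k'' => 2 * c * chebT k' c - chebT k'' c
            end
  end.

(* chebUm1 k c = U_{k-1}(c), with U_{-1} = 0, U_0 = 1, U_1 = 2c, ... *)
Fixpoint chebUm1 (k : nat) (c : R) : R :=
  match k with
  | O => 0
  | S k' => match k' with
            | O => 1
            | S k'' => 2 * c * chebUm1 k' c - chebUm1 k'' c
            end
  end.

Definition Uharm (n l : nat) (th1 th2 : R) : R :=
  assoc_legendre n l (cos th1) * chebT l (cos th2).
Definition Vharm (n m : nat) (th1 th2 : R) : R :=
  assoc_legendre n m (cos th1) * sin th2 * chebUm1 m (cos th2).

Definition rad (x : pt) : R := sqrt (px0 x ^ 2 + px1 x ^ 2 + px2 x ^ 2).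
Definition rho (x : pt) : R := sqrt (px1 x ^ 2 + px2 x ^ 2).
Definition cth1 (x : pt) : R := px0 x / rad x.
(* cos th2, sin th2; on the x0-axis th2 is taken as 2*pi (the values of
   U^l_n, V^m_n there do not depend on th2 anyway) *)
Definition cth2 (x : pt) : R := if Req_EM_T (rho x) 0 then 1 else px1 x / rho x.
Definition sth2 (x : pt) : R := if Req_EM_T (rho x) 0 then 0 else px2 x / rho x.

Definition rU (k n l : nat) (x : pt) : R :=
  rad x ^ k * (assoc_legendre n l (cth1 x) * chebT l (cth2 x)).
Definition rV (k n m : nat) (x : pt) : R :=
  rad x ^ k * (assoc_legendre n m (cth1 x) * sth2 x * chebUm1 m (cth2 x)).

Definition Xdag_at (n l : nat) (x : pt) (v : quat) : Prop :=
  exists w, has_Dbar (fun y => qR (rU (S n) (S n) l y)) x w /\ v = qscale (1/2) w.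
Definition Ydag_at (n m : nat) (x : pt) (v : quat) : Prop :=
  exists w, has_Dbar (fun y => qR (rV (S n) (S n) m y)) x w /\ v = qscale (1/2) w.

Definition sph (r th1 th2 : R) : pt :=
  (r * cos th1, r * sin th1 * cos th2, r * sin th1 * sin th2).

Definition Rpm (sg : R) (n m : nat) (th1 th2 : R) : R :=
  Uharm n (S m) th1 th2 + sg * (INR (n + m + 1) * INR (n + m)) * Uharm n (m - 1) th1 th2.
Definition Spm (sg : R) (n m : nat) (th1 th2 : R) : R :=
  Vharm n (S m) th1 th2 + sg * (INR (n + m + 1) * INR (n + m)) * Vharm n (m - 1) th1 th2.

(* Main.v *)
Require Import Defs.
From Stdlib Require Import Reals Lra Lia Arith Bool FunctionalExtensionality.
Open Scope R_scope.

Lemma D_const c x : derivable_pt_lim (fun _ => c) x 0.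
Proof. apply (derivable_pt_lim_const c x). Qed.
Lemma D_id x : derivable_pt_lim (fun t => t) x 1.
Proof. apply (derivable_pt_lim_id x). Qed.
Lemma D_plus f g x a b : derivable_pt_lim f x a -> derivable_pt_lim g x b ->
  derivable_pt_lim (fun t => f t + g t) x (a + b).
Proof. intros; apply (derivable_pt_lim_plus f g); auto. Qed.
Lemma D_minus f g x a b : derivable_pt_lim f x a -> derivable_pt_lim g x b ->
  derivable_pt_lim (fun t => f t - g t) x (a - b).
Proof. intros; apply (derivable_pt_lim_minus f g); auto. Qed.
Lemma D_mult f g x a b : derivable_pt_lim f x a -> derivable_pt_lim g x b ->
  derivable_pt_lim (fun t => f t * g t) x (a * g x + f x * b).
Proof. intros; apply (derivable_pt_lim_mult f g); auto. Qed.
Lemma D_comp f g x a b : derivable_pt_lim g x a -> derivable_pt_lim f (g x) b ->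
  derivable_pt_lim (fun t => f (g t)) x (b * a).
Proof. intros; apply (derivable_pt_lim_comp g f); auto. Qed.
Lemma D_eq f x a b : derivable_pt_lim f x a -> a = b -> derivable_pt_lim f x b.
Proof. intros; subst; auto. Qed.
Lemma D_ext f g x a : (forall t, f t = g t) -> derivable_pt_lim f x a -> derivable_pt_lim g x a.
Proof. intros; eapply derivable_pt_lim_ext; eauto. Qed.
Lemma D_pow f x a k : derivable_pt_lim f x a ->
  derivable_pt_lim (fun t => f t ^ k) x (INR k * f x ^ pred k * a).
Proof. intros H. eapply D_eq. apply (D_comp (fun y => y ^ k) f x a); auto.
  apply derivable_pt_lim_pow. ring. Qed.
Lemma D_sqrt f x a : 0 < f x -> derivable_pt_lim f x a ->
  derivable_pt_lim (fun t => sqrt (f t)) x (a / (2 * sqrt (f x))).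
Proof. intros P H. eapply D_eq. apply (D_comp sqrt f x a); auto.
  apply derivable_pt_lim_sqrt; auto. unfold Rdiv; ring. Qed.
Lemma D_inv f x a : f x <> 0 -> derivable_pt_lim f x a ->
  derivable_pt_lim (fun t => / f t) x (- a / (f x)^2).
Proof. intros P H. set (pr := exist _ a H : derivable_pt f x).
  pose proof (derive_pt_inv f x pr P) as E.
  pose proof (proj2_sig (derivable_pt_inv f x P pr)) as L.
  change (derivable_pt_lim (/ f)%F x (derive_pt (/ f)%F x (derivable_pt_inv f x P pr))) in L.
  rewrite E in L. simpl in L. unfold Rsqr in L. replace (f x ^ 2) with (f x * f x) by ring.
  exact L. Qed.

Lemma D_sum (f : nat -> R -> R) d x n :
  (forall j, (j <= n)%nat -> derivable_pt_lim (f j) x (d j)) ->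
  derivable_pt_lim (fun t => sum_f_R0 (fun j => f j t) n) x (sum_f_R0 d n).
Proof. induction n; intros H; simpl.
  - apply H; lia.
  - apply D_plus. apply IHn; intros; apply H; lia. apply H; lia. Qed.

Lemma fact_pos_R n : 0 < INR (fact n).
Proof. apply lt_0_INR. apply lt_O_fact. Qed.

Lemma gd_deriv N l t :
  derivable_pt_lim (legendre_deriv N l) t (legendre_deriv N (S l) t).
Proof.
  unfold legendre_deriv. apply D_sum. intros j _.
  destruct (Nat.leb_spec l j) as [Hl|Hl].
  - destruct (Nat.leb_spec (S l) j) as [Hs|Hs].
    + eapply D_eq. apply D_mult. apply D_const. apply derivable_pt_lim_pow.
      replace (j - l)%nat with (S (j - S l)) by lia. simpl pred.
      rewrite fact_simpl.  rewrite mult_INR.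
      pose proof (fact_pos_R (j - S l)).
      assert (0 < INR (S (j - S l))) by (apply lt_0_INR; lia).
      field. lra.
    + assert (j = l) by lia. subst. eapply D_eq. apply D_mult. apply D_const.
      apply derivable_pt_lim_pow. rewrite Nat.sub_diag. simpl. ring.
  - destruct (Nat.leb_spec (S l) j) as [Hs|Hs]; [lia|]. apply D_const.
Qed.

Lemma leg_coef_val N j k : N = (j + 2*k)%nat ->
  leg_coef N j = (-1)^k * C N k * C (2*N-2*k) N / 2^N.
Proof. intros ->. unfold leg_coef.
  replace (j + 2*k - j)%nat with (k*2)%nat by lia.
  rewrite Nat.even_mul. simpl Nat.even. rewrite orb_true_r.
  replace (j <=? j + 2*k)%nat with true by (symmetry; apply Nat.leb_le; lia).
  simpl andb. rewrite Nat.div_mul by lia. reflexivity. Qed.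

Lemma leg_coef_zero N j : (N < j)%nat \/ (exists k, N = j + 2*k+1)%nat -> leg_coef N j = 0.
Proof. intros H. unfold leg_coef.
  destruct H as [H|[k H]].
  - replace (j <=? N)%nat with false by (symmetry; apply Nat.leb_gt; lia). reflexivity.
  - replace (N - j)%nat with (S (k*2))%nat by lia.
    rewrite Nat.even_succ, <- Nat.negb_even, Nat.even_mul. simpl Nat.even. rewrite orb_true_r. simpl negb. rewrite andb_false_r. reflexivity.
Qed.

Lemma leg_cases N j : (N < j)%nat \/ (exists k, N = j + 2*k+1)%nat \/ (exists k, N = j + 2*k)%nat.
Proof. destruct (Nat.lt_ge_cases N j) as [H|H]; [left; auto|right].
  destruct (Nat.Even_or_Odd (N - j)) as [[k Hk]|[k Hk]].
  - right; exists k; lia.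
  - left; exists k; lia. Qed.

Lemma INRf n : INR (fact n) <> 0.
Proof. apply not_0_INR. apply fact_neq_0. Qed.

Lemma R3 M i : INR (S i) * leg_coef (S M) (S i) = (INR (S M) + INR i) * leg_coef M i.
Proof.
  destruct (leg_cases M i) as [H|[[k H]|[k H]]].
  - rewrite !leg_coef_zero; try (left; lia). ring.
  - rewrite !leg_coef_zero; try (right; exists k; lia). ring.
  - rewrite (leg_coef_val (S M) (S i) k) by lia. rewrite (leg_coef_val M i k) by lia.
    subst M. unfold C.
    replace (S (i + 2*k) - k)%nat with (S (i+k)) by lia.
    replace (2 * S (i + 2*k) - 2*k)%nat with (S (S (2*i+2*k))) by lia.
    replace (S (S (2*i+2*k)) - S (i + 2*k))%nat with (S i) by lia.
    replace (i + 2*k - k)%nat with (i+k)%nat by lia.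
    replace (2 * (i + 2*k) - 2*k)%nat with (2*i+2*k)%nat by lia.
    replace (2*i+2*k - (i + 2*k))%nat with i by lia.
    rewrite !fact_simpl. rewrite !mult_INR. simpl pow.
    pose proof (INRf i). pose proof (INRf k). pose proof (INRf (i+k)).
    pose proof (INRf (2*i+2*k)). pose proof (INRf (i+2*k)).
    rewrite !S_INR, !plus_INR, !mult_INR. replace (INR 2) with 2 by (simpl; ring).
    assert (0 <= INR k) by apply pos_INR.
    assert (0 <= INR i) by apply pos_INR.
    field. repeat split; try lra; try (apply pow_nonzero; lra); try apply INRf.
Qed.

Lemma R2 M i : (INR (S M) - INR i) * leg_coef (S M) i + INR (S i) * leg_coef M (S i) = 0.
Proof.
  destruct (leg_cases M (S i)) as [H|[[k H]|[k H]]].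
  - rewrite (leg_coef_zero M); [|left; lia].
    destruct (Nat.eq_dec i (S M)) as [->|Hn]. ring.
    rewrite leg_coef_zero. ring. destruct (Nat.eq_dec i M). right; exists O; lia. left; lia.
  - rewrite !leg_coef_zero; try (right; exists (S k); lia). ring. right; exists k; lia.
  - rewrite (leg_coef_val (S M) i (S k)) by lia. rewrite (leg_coef_val M (S i) k) by lia.
    subst M. unfold C.
    replace (S (S i + 2*k) - S k)%nat with (S (i+k)) by lia.
    replace (2 * S (S i + 2*k) - 2*S k)%nat with (S (S (2*i+2*k))) by lia.
    replace (S (S (2*i+2*k)) - S (S i + 2*k))%nat with i by lia.
    replace (S i + 2*k - k)%nat with (S (i+k))%nat by lia.
    replace (2 * (S i + 2*k) - 2*k)%nat with (S (S (2*i+2*k)))%nat by lia.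
    replace (S (S (2*i+2*k)) - (S i + 2*k))%nat with (S i) by lia.
    rewrite !fact_simpl. rewrite !mult_INR. simpl pow.
    pose proof (INRf i). pose proof (INRf k). pose proof (INRf (i+k)).
    pose proof (INRf (2*i+2*k)). pose proof (INRf (i+2*k)).
    rewrite !S_INR, !plus_INR, !mult_INR. replace (INR 2) with 2 by (simpl; ring).
    assert (0 <= INR k) by apply pos_INR.
    assert (0 <= INR i) by apply pos_INR.
    rewrite !S_INR. set (P2 := 2 ^ _). set (F1 := INR (fact (S i + 2*k))). assert (P2 <> 0) by (apply pow_nonzero; lra). assert (F1 <> 0) by apply INRf. field. repeat split; try lra; try (apply pow_nonzero; lra); try apply INRf.
Qed.

Definition psum (a : nat -> R) K t := sum_f_R0 (fun j => a j * t ^ j) K.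

Lemma sum_shift f N : sum_f_R0 f (S N) = f O + sum_f_R0 (fun i => f (S i)) N.
Proof. induction N. simpl. ring. rewrite tech5, IHN. simpl. ring. Qed.

Lemma psum_ext a K K' t : (forall j, (K < j)%nat -> a j = 0) -> (K <= K')%nat ->
  psum a K t = psum a K' t.
Proof. intros H HK. induction HK. reflexivity. unfold psum in *. rewrite tech5, <- IHHK.
  rewrite H by lia. ring. Qed.

Lemma psum_plus a b K t : psum a K t + psum b K t = psum (fun j => a j + b j) K t.
Proof. unfold psum; induction K; simpl. ring. rewrite <- IHK. ring. Qed.
Lemma psum_scal c a K t : c * psum a K t = psum (fun j => c * a j) K t.
Proof. unfold psum; induction K; simpl. ring. rewrite <- IHK. ring. Qed.
Lemma psum_minus a b K t : psum a K t - psum b K t = psum (fun j => a j - b j) K t.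
Proof. unfold psum; induction K; simpl. ring. rewrite <- IHK. ring. Qed.
Lemma psum_zero a K t : (forall j, a j = 0) -> psum a K t = 0.
Proof. intros H; unfold psum; induction K; simpl; rewrite H, ?IHK; ring. Qed.
Lemma psum_t a K t : t * psum (fun i => INR (S i) * a (S i)) K t = psum (fun j => INR j * a j) (S K) t.
Proof. unfold psum. rewrite sum_shift. simpl (INR 0).
  assert (forall K, t * sum_f_R0 (fun j => INR (S j) * a (S j) * t ^ j) K =
     sum_f_R0 (fun i => INR (S i) * a (S i) * t ^ (S i)) K) as E.
  { induction K0. simpl. ring. rewrite !tech5, <- IHK0. simpl pow. ring. }
  rewrite E. ring. Qed.

Lemma gd0 N t : legendre_deriv N 0 t = psum (leg_coef N) N t.
Proof. unfold legendre_deriv, psum. apply sum_eq. intros j _. simpl.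
  rewrite Nat.sub_0_r. field. apply INRf. Qed.

Lemma leg_coef_big N j : (N < j)%nat -> leg_coef N j = 0.
Proof. intros; apply leg_coef_zero; left; auto. Qed.

Lemma gd1 N t : legendre_deriv N 1 t = psum (fun i => INR (S i) * leg_coef N (S i)) N t.
Proof. unfold legendre_deriv, psum.
  set (f := fun j => if (1 <=? j)%nat then leg_coef N j * (INR (fact j) / INR (fact (j - 1))) * t ^ (j - 1) else 0).
  transitivity (sum_f_R0 f (S N)).
  { rewrite tech5. assert (f (S N) = 0) as ->. { unfold f. simpl (1 <=? S N)%nat. rewrite leg_coef_big by lia. ring. } ring. }
  rewrite sum_shift. unfold f at 1. simpl (1 <=? 0)%nat. rewrite Rplus_0_l.
  apply sum_eq. intros i _. unfold f. simpl (1 <=? S i)%nat.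
  replace (S i - 1)%nat with i by lia. rewrite fact_simpl, mult_INR.
  field. apply INRf. Qed.

Lemma Id2_0 M t : INR (S M) * legendre_deriv (S M) 0 t - t * legendre_deriv (S M) 1 t
   + legendre_deriv M 1 t = 0.
Proof. rewrite gd0, !gd1, psum_t.
  rewrite (psum_ext (leg_coef (S M)) (S M) (S (S M))) by first [lia | intros; apply leg_coef_big; lia].
  rewrite (psum_ext _ M (S (S M))) by first [lia | intros; rewrite leg_coef_big by lia; ring].
  rewrite psum_scal. unfold Rminus. rewrite <- (Rmult_1_l (psum (fun j => INR j * _) _ t)).
  rewrite Ropp_mult_distr_l, psum_scal, !psum_plus. apply psum_zero. intros j.
  pose proof (R2 M j). lra. Qed.

Lemma Id4_0 M t : legendre_deriv (S M) 1 t - t * legendre_deriv M 1 t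
   - INR (S M) * legendre_deriv M 0 t = 0.
Proof. rewrite gd0, !gd1, psum_t.
  rewrite (psum_ext _ (S M) (S (S M))) by first [lia | intros; rewrite leg_coef_big by lia; ring].
  rewrite (psum_ext (leg_coef M) M (S (S M))) by first [lia | intros; apply leg_coef_big; lia].
  rewrite (psum_ext _ (S M) (S (S M))) by first [lia | intros; rewrite leg_coef_big by lia; ring].
  rewrite psum_scal, !psum_minus. apply psum_zero. intros j.
  pose proof (R3 M j). lra. Qed.

Notation g := legendre_deriv.

Lemma zero_deriv E d t : (forall u, E u = 0) -> derivable_pt_lim E t d -> d = 0.
Proof. intros H D. assert (derivable_pt_lim E t 0).
  { apply (D_ext (fun _ => 0)). intros; rewrite H; auto. apply D_const. }
  eapply uniqueness_limite; eauto. Qed.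

Ltac dg := first [ apply gd_deriv | apply D_const | apply D_id ].

Lemma Id2 M l t : (INR (S M) - INR l) * g (S M) l t - t * g (S M) (S l) t + g M (S l) t = 0.
Proof. revert t; induction l; intro t.
  - simpl INR. rewrite Rminus_0_r. apply Id2_0.
  - set (N := S M) in *.
    apply (zero_deriv (fun t => (INR N - INR l) * g N l t - t * g N (S l) t + g M (S l) t)
      _ t IHl).
    eapply D_eq. apply D_plus. apply D_minus. apply D_mult. dg. dg. apply D_mult; dg. dg.
    rewrite S_INR. ring. Qed.

Lemma Id4 M l t : g (S M) (S l) t - t * g M (S l) t - (INR (S M) + INR l) * g M l t = 0.
Proof. revert t; induction l; intro t.
  - simpl INR. rewrite Rplus_0_r. apply Id4_0.
  - set (N := S M) in *.
    apply (zero_deriv (fun t => g N (S l) t - t * g M (S l) t - (INR N + INR l) * g M l t)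
      _ t IHl).
    eapply D_eq. apply D_minus. apply D_minus. dg. apply D_mult; dg. apply D_mult; dg.
    rewrite S_INR. ring. Qed.

Lemma Id1 M l t : (INR (S M) - INR l) * t * g (S M) l t + (1 - t^2) * g (S M) (S l) t
   - (INR (S M) + INR l) * g M l t = 0.
Proof. revert t; induction l; intro t.
  - change (INR 0) with 0. pose proof (Id2_0 M t). pose proof (Id4_0 M t).
    replace (INR (S M) - 0) with (INR (S M)) by ring. rewrite Rplus_0_r.
    replace (INR (S M) * t * g (S M) 0 t + (1 - t ^ 2) * g (S M) 1 t - INR (S M) * g M 0 t)
      with ((g (S M) 1 t - t * g M 1 t - INR (S M) * g M 0 t) +
            t * (INR (S M) * g (S M) 0 t - t * g (S M) 1 t + g M 1 t)) by ring.
    rewrite H, H0. ring.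
  - set (N := S M) in *.
    epose proof (zero_deriv (fun t => (INR N - INR l) * t * g N l t + (1 - t^2) * g N (S l) t
      - (INR N + INR l) * g M l t) _ t IHl) as Z.
    specialize (Z ltac:(apply D_minus; [apply D_plus; [apply D_mult; [apply D_mult; dg | dg] |
      apply D_mult; [apply D_minus; [dg | apply (D_pow (fun t => t)); dg] | dg]] | apply D_mult; dg])).
    pose proof (Id2 M l t) as I2. fold N in I2.
    rewrite S_INR. simpl pred in Z. change (INR 2) with 2 in Z. lra. Qed.

Lemma ODE M t : (1 - t^2) * g M 2 t - 2 * t * g M 1 t + INR M * (INR M + 1) * g M 0 t = 0.
Proof. destruct M as [|M'].
  - unfold legendre_deriv. simpl. ring.
  - pose proof (Id1 M' 1 t). pose proof (Id2 M' 0 t).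
    replace ((1 - t ^ 2) * g (S M') 2 t - 2 * t * g (S M') 1 t + INR (S M') * (INR (S M') + 1) * g (S M') 0 t)
      with (((INR (S M') - INR 1) * t * g (S M') 1 t + (1 - t ^ 2) * g (S M') 2 t
       - (INR (S M') + INR 1) * g M' 1 t) + (INR (S M') + 1) *
       ((INR (S M') - INR 0) * g (S M') 0 t - t * g (S M') 1 t + g M' 1 t)).
    rewrite H, H0. ring. change (INR 1) with 1. change (INR 0) with 0. ring. Qed.

Lemma Id3 M p t : 2 * (INR p + 1) * g (S M) (S p) t - (1 - t^2) * g M (S (S p)) t
   - (INR (S M) + INR p + 1) * (INR (S M) + INR p) * g M p t = 0.
Proof. revert t; induction p; intro t.
  - pose proof (ODE M t). pose proof (Id4 M 0 t). rewrite S_INR in *. simpl INR in *.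
    replace (2 * (0 + 1) * g (S M) 1 t - (1 - t ^ 2) * g M 2 t - (INR M + 1 + 0 + 1) * (INR M + 1 + 0) * g M 0 t)
      with (2 * (g (S M) 1 t - t * g M 1 t - (INR M + 1 + 0) * g M 0 t)
        - ((1 - t ^ 2) * g M 2 t - 2 * t * g M 1 t + INR M * (INR M + 1) * g M 0 t)) by ring.
    rewrite H, H0. ring.
  - set (N := S M) in *.
    epose proof (zero_deriv (fun t => 2 * (INR p + 1) * g N (S p) t - (1 - t^2) * g M (S (S p)) t
      - (INR N + INR p + 1) * (INR N + INR p) * g M p t) _ t IHp) as Z.
    specialize (Z ltac:(apply D_minus; [apply D_minus; [apply D_mult; dg |
      apply D_mult; [apply D_minus; [dg | apply (D_pow (fun t => t)); dg] | dg]] | apply D_mult; dg])).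
    pose proof (Id4 M (S p) t) as I4. fold N in I4.
    rewrite !S_INR in *. simpl pred in Z. change (INR 2) with 2 in Z. change (INR 0) with 0 in Z. lra. Qed.


Fixpoint AB (l : nat) (a b : R) : R * R :=
  match l with
  | O => (1, 0)
  | S l' => (a * fst (AB l' a b) - b * snd (AB l' a b), b * fst (AB l' a b) + a * snd (AB l' a b))
  end.
Definition Aq l a b := fst (AB l a b).
Definition Bq l a b := snd (AB l a b).

Lemma Aq_S l a b : Aq (S l) a b = a * Aq l a b - b * Bq l a b.
Proof. reflexivity. Qed.
Lemma Bq_S l a b : Bq (S l) a b = b * Aq l a b + a * Bq l a b.
Proof. reflexivity. Qed.

Lemma cheb_pair l c :
  (chebT (S l) c = c * chebT l c - (1 - c^2) * chebUm1 l c /\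
   chebUm1 (S l) c = chebT l c + c * chebUm1 l c) /\
  (chebT (S (S l)) c = c * chebT (S l) c - (1 - c^2) * chebUm1 (S l) c /\
   chebUm1 (S (S l)) c = chebT (S l) c + c * chebUm1 (S l) c).
Proof. induction l.
  - simpl. split; split; ring.
  - destruct IHl as [[H1 H2] [H3 H4]]. split. split; auto.
    change (chebT (S (S (S l))) c) with (2 * c * chebT (S (S l)) c - chebT (S l) c).
    change (chebUm1 (S (S (S l))) c) with (2 * c * chebUm1 (S (S l)) c - chebUm1 (S l) c).
    change (chebT (S (S l)) c) with (2 * c * chebT (S l) c - chebT l c) in *.
    change (chebUm1 (S (S l)) c) with (2 * c * chebUm1 (S l) c - chebUm1 l c) in *.
    split; nra.
Qed.

Lemma chebT_S l c : chebT (S l) c = c * chebT l c - (1 - c^2) * chebUm1 l c.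
Proof. apply (cheb_pair l c). Qed.
Lemma chebU_S l c : chebUm1 (S l) c = chebT l c + c * chebUm1 l c.
Proof. apply (cheb_pair l c). Qed.

Lemma AB_polar l r C S : C^2 + S^2 = 1 ->
  Aq l (r*C) (r*S) = r^l * chebT l C /\ Bq l (r*C) (r*S) = r^l * S * chebUm1 l C.
Proof. intros HCS. induction l.
  - unfold Aq, Bq; simpl. split; ring.
  - destruct IHl as [IA IB]. rewrite Aq_S, Bq_S, IA, IB, chebT_S, chebU_S.
    replace (1 - C^2) with (S^2) by lra. split; simpl pow; ring.
Qed.

Lemma dA1 l a b : derivable_pt_lim (fun u => Aq (S l) u b) a (INR (S l) * Aq l a b) /\
                  derivable_pt_lim (fun u => Bq (S l) u b) a (INR (S l) * Bq l a b).
Proof. revert a. induction l; intro a.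
  - split.
    + apply (D_ext (fun u => u)). intro; unfold Aq; simpl; ring.
      eapply D_eq. apply D_id. unfold Aq; simpl; ring.
    + apply (D_ext (fun u => b)). intro; unfold Bq; simpl; ring.
      eapply D_eq. apply D_const. unfold Bq; simpl; ring.
  - destruct (IHl a) as [IA IB]. split.
    + apply (D_ext (fun u => u * Aq (S l) u b - b * Bq (S l) u b)). intro; reflexivity.
      eapply D_eq. apply D_minus. apply D_mult. apply D_id. apply IA. apply D_mult. apply D_const. apply IB.
      cbv beta. rewrite !S_INR. rewrite (Aq_S l a b). ring.
    + apply (D_ext (fun u => b * Aq (S l) u b + u * Bq (S l) u b)). intro; reflexivity.
      eapply D_eq. apply D_plus. apply D_mult. apply D_const. apply IA. apply D_mult. apply D_id. apply IB.
      cbv beta. rewrite !S_INR. rewrite (Bq_S l a b). ring.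
Qed.

Lemma dA2 l a b : derivable_pt_lim (fun u => Aq (S l) a u) b (- INR (S l) * Bq l a b) /\
                  derivable_pt_lim (fun u => Bq (S l) a u) b (INR (S l) * Aq l a b).
Proof. revert b. induction l; intro b.
  - split.
    + apply (D_ext (fun u => a)). intro; unfold Aq; simpl; ring.
      eapply D_eq. apply D_const. unfold Bq; simpl; ring.
    + apply (D_ext (fun u => u)). intro; unfold Bq; simpl; ring.
      eapply D_eq. apply D_id. unfold Aq; simpl; ring.
  - destruct (IHl b) as [IA IB]. split.
    + apply (D_ext (fun u => a * Aq (S l) a u - u * Bq (S l) a u)). intro; reflexivity.
      eapply D_eq. apply D_minus. apply D_mult. apply D_const. apply IA. apply D_mult. apply D_id. apply IB.
      cbv beta. rewrite !S_INR. rewrite (Bq_S l a b). ring.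
    + apply (D_ext (fun u => u * Aq (S l) a u + a * Bq (S l) a u)). intro; reflexivity.
      eapply D_eq. apply D_plus. apply D_mult. apply D_id. apply IA. apply D_mult. apply D_const. apply IB.
      cbv beta. rewrite !S_INR. rewrite (Aq_S l a b). ring.
Qed.

Definition Qf N l (y : pt) := rad y ^ (N - l) * legendre_deriv N l (px0 y / rad y).



Lemma gd_big N l t : (N < l)%nat -> legendre_deriv N l t = 0.
Proof. intros H. unfold legendre_deriv.
  assert (forall K, (K <= N)%nat -> sum_f_R0 (fun j => if (l <=? j)%nat then
     leg_coef N j * (INR (fact j) / INR (fact (j - l))) * t ^ (j - l) else 0) K = 0) as E.
  { induction K; intros HK.
    - simpl. replace (l <=? 0)%nat with false by (symmetry; apply Nat.leb_gt; lia). reflexivity.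
    - rewrite tech5, IHK by lia. replace (l <=? S K)%nat with false by (symmetry; apply Nat.leb_gt; lia). ring. }
  apply E; lia. Qed.

Lemma sqr_nonneg_sum a b c : 0 <= a^2 + b^2 + c^2.
Proof. nra. Qed.

Lemma rad_zero y : rad y = 0 -> px0 y = 0 /\ px1 y = 0 /\ px2 y = 0.
Proof. unfold rad. intros H. apply sqrt_eq_0 in H; [|apply sqr_nonneg_sum]. nra. Qed.

Lemma rho_zero y : rho y = 0 -> px1 y = 0 /\ px2 y = 0.
Proof. unfold rho. intros H. apply sqrt_eq_0 in H; [|nra]. nra. Qed.

Lemma rho_nonneg y : 0 <= rho y.
Proof. apply sqrt_pos. Qed.

Lemma sqrt_sq_div y : 0 < rad y -> sqrt (1 - (px0 y / rad y) ^ 2) = rho y / rad y.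
Proof. intros H.
  assert (E : 1 - (px0 y / rad y) ^ 2 = (rho y / rad y) ^ 2).
  { assert (rad y ^ 2 = px0 y ^ 2 + px1 y ^ 2 + px2 y ^ 2) as R2
      by (unfold rad; apply pow2_sqrt; apply sqr_nonneg_sum).
    assert (rho y ^ 2 = px1 y ^ 2 + px2 y ^ 2) as P2
      by (unfold rho; apply pow2_sqrt; nra).
    assert (1 - (px0 y / rad y) ^ 2 - (rho y / rad y) ^ 2 = (rad y ^ 2 - px0 y ^ 2 - rho y ^ 2) / rad y ^ 2) as F
      by (field; lra).
    rewrite R2, P2 in F. replace (px0 y ^ 2 + px1 y ^ 2 + px2 y ^ 2 - px0 y ^ 2 - (px1 y ^ 2 + px2 y ^ 2)) with 0 in F by ring.
    unfold Rdiv at 3 in F. rewrite Rmult_0_l in F. lra. }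
  rewrite E. apply sqrt_pow2. unfold Rdiv. apply Rmult_le_pos. apply rho_nonneg. left; apply Rinv_0_lt_compat; lra. Qed.

Lemma Aq00 l : Aq (S l) 0 0 = 0.
Proof. rewrite Aq_S. ring. Qed.
Lemma Bq00 l : Bq (S l) 0 0 = 0.
Proof. rewrite Bq_S. ring. Qed.

Lemma repU n l y : rU (S n) (S n) l y = Aq l (px1 y) (px2 y) * Qf (S n) l y.
Proof. unfold rU, Qf, assoc_legendre, cth1.
  destruct (Req_dec (rad y) 0) as [H0|Hp].
  - pose proof (rad_zero y H0) as (Ha&Hb&Hc). rewrite H0, Ha, Hb, Hc. destruct l.
    + simpl. ring.
    + rewrite Aq00. simpl. ring.
  - assert (Hr : 0 < rad y) by (pose proof (sqrt_pos (px0 y ^ 2 + px1 y ^ 2 + px2 y ^ 2)); unfold rad in *; lra).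
    rewrite sqrt_sq_div by auto. unfold cth2.
    destruct (Req_EM_T (rho y) 0) as [E|E].
    + pose proof (rho_zero y E) as (Hb&Hc). rewrite E, Hb, Hc. destruct l.
      * unfold Aq; simpl. ring.
      * rewrite Aq00. unfold Rdiv. simpl. ring.
    + pose proof (rho_nonneg y).
      assert (Hrho: 0 < rho y) by lra.
      assert (HCS : (px1 y / rho y)^2 + (px2 y / rho y)^2 = 1).
      { unfold rho in *. field_simplify. 2: lra. rewrite pow2_sqrt by nra. field.
        rewrite <- (pow2_sqrt (px1 y ^ 2 + px2 y ^ 2)) by nra. apply pow_nonzero; lra. }
      destruct (AB_polar l (rho y) _ _ HCS) as [HA _].
      assert (Hxy : px1 y = rho y * (px1 y / rho y) /\ px2 y = rho y * (px2 y / rho y))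
        by (split; field; lra). destruct Hxy as [Hx1 Hx2].
      rewrite <- Hx1, <- Hx2 in HA. rewrite HA.
      destruct (Nat.le_gt_cases l (S n)) as [Hl|Hl].
      * replace (rad y ^ S n) with (rad y ^ l * rad y ^ (S n - l)) by (rewrite <- pow_add; f_equal; lia).
        unfold Rdiv. rewrite Rpow_mult_distr, pow_inv. field. apply pow_nonzero; lra.
      * rewrite gd_big by lia. ring.
Qed.

Lemma repV n l y : rV (S n) (S n) l y = Bq l (px1 y) (px2 y) * Qf (S n) l y.
Proof. unfold rV, Qf, assoc_legendre, cth1.
  destruct (Req_dec (rad y) 0) as [H0|Hp].
  - pose proof (rad_zero y H0) as (Ha&Hb&Hc). rewrite H0, Ha, Hb, Hc. destruct l.
    + unfold sth2. destruct (Req_EM_T _ _); simpl; ring.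
    + rewrite Bq00. simpl. ring.
  - assert (Hr : 0 < rad y) by (pose proof (sqrt_pos (px0 y ^ 2 + px1 y ^ 2 + px2 y ^ 2)); unfold rad in *; lra).
    rewrite sqrt_sq_div by auto. unfold cth2, sth2.
    destruct (Req_EM_T (rho y) 0) as [E|E].
    + pose proof (rho_zero y E) as (Hb&Hc). rewrite E, Hb, Hc. destruct l.
      * unfold Bq; simpl. ring.
      * rewrite Bq00. unfold Rdiv. simpl. ring.
    + pose proof (rho_nonneg y).
      assert (Hrho: 0 < rho y) by lra.
      assert (HCS : (px1 y / rho y)^2 + (px2 y / rho y)^2 = 1).
      { unfold rho in *. field_simplify. 2: lra. rewrite pow2_sqrt by nra. field.
        rewrite <- (pow2_sqrt (px1 y ^ 2 + px2 y ^ 2)) by nra. apply pow_nonzero; lra. }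
      destruct (AB_polar l (rho y) _ _ HCS) as [_ HB].
      assert (Hxy : px1 y = rho y * (px1 y / rho y) /\ px2 y = rho y * (px2 y / rho y))
        by (split; field; lra). destruct Hxy as [Hx1 Hx2].
      rewrite <- Hx1, <- Hx2 in HB. rewrite HB.
      destruct (Nat.le_gt_cases l (S n)) as [Hl|Hl].
      * replace (rad y ^ S n) with (rad y ^ l * rad y ^ (S n - l)) by (rewrite <- pow_add; f_equal; lia).
        unfold Rdiv. rewrite Rpow_mult_distr, pow_inv. field. split; [lra|]. apply pow_nonzero; lra.
      * rewrite gd_big by lia. ring.
Qed.

Lemma d_rad (u0 u1 u2 : R -> R) (d0 d1 d2 : R) :
  derivable_pt_lim u0 0 d0 -> derivable_pt_lim u1 0 d1 -> derivable_pt_lim u2 0 d2 ->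
  0 < rad (u0 0, u1 0, u2 0) ->
  derivable_pt_lim (fun t => rad (u0 t, u1 t, u2 t)) 0
    ((u0 0 * d0 + u1 0 * d1 + u2 0 * d2) / rad (u0 0, u1 0, u2 0)).
Proof. intros H0 H1 H2 Hpos. unfold rad, px0, px1, px2; cbn [fst snd].
  assert (0 < u0 0 ^ 2 + u1 0 ^ 2 + u2 0 ^ 2).
  { destruct (sqr_nonneg_sum (u0 0) (u1 0) (u2 0)) as [h|h]; auto.
    unfold rad, px0, px1, px2 in Hpos; cbn [fst snd] in Hpos. rewrite <- h, sqrt_0 in Hpos. lra. }
  eapply D_eq. apply D_sqrt. auto.
  apply D_plus. apply D_plus. apply D_pow; eassumption. apply D_pow; eassumption. apply D_pow; eassumption.
  simpl pred. change (INR 2) with 2. cbv beta. field. apply Rgt_not_eq. apply sqrt_lt_R0. auto. Qed.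

Lemma d_Q (u0 u1 u2 : R -> R) (d0 d1 d2 : R) N l :
  derivable_pt_lim u0 0 d0 -> derivable_pt_lim u1 0 d1 -> derivable_pt_lim u2 0 d2 ->
  0 < rad (u0 0, u1 0, u2 0) ->
  let RR := rad (u0 0, u1 0, u2 0) in
  let DD := (u0 0 * d0 + u1 0 * d1 + u2 0 * d2) / RR in
  derivable_pt_lim (fun t => Qf N l (u0 t, u1 t, u2 t)) 0
  (INR (N - l) * RR ^ pred (N - l) * DD * legendre_deriv N l (u0 0 / RR)
   + RR ^ (N - l) * (legendre_deriv N (S l) (u0 0 / RR) * ((d0 * RR - u0 0 * DD) / RR^2))).
Proof. intros H0 H1 H2 Hpos RR DD. assert (HR : 0 < RR) by exact Hpos.
  assert (Hr := d_rad u0 u1 u2 d0 d1 d2 H0 H1 H2 Hpos). fold RR DD in Hr.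
  assert (Hc : derivable_pt_lim (fun t => px0 (u0 t, u1 t, u2 t) / rad (u0 t, u1 t, u2 t)) 0
   ((d0 * RR - u0 0 * DD) / RR^2)).
  { apply (D_ext (fun t => u0 t * / rad (u0 t, u1 t, u2 t))). intro; reflexivity.
    eapply D_eq. apply D_mult. apply H0. apply D_inv. fold RR. lra. apply Hr.
    cbv beta. fold RR. field. fold RR in Hpos. lra. }
  unfold Qf. eapply D_eq. apply D_mult. apply D_pow. apply Hr.
  apply (D_comp (legendre_deriv N l)). apply Hc. apply gd_deriv. reflexivity. Qed.

Definition QD N l a0 a1 a2 d0 d1 d2 :=
  let R := rad (a0, a1, a2) in let DD := (a0 * d0 + a1 * d1 + a2 * d2) / R in
  INR (N - l) * R ^ pred (N - l) * DD * legendre_deriv N l (a0 / R)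
   + R ^ (N - l) * (legendre_deriv N (S l) (a0 / R) * ((d0 * R - a0 * DD) / R ^ 2)).

Lemma D_shift a x : derivable_pt_lim (fun t => a + t) x 1.
Proof. apply (D_ext (fun t => t + a)). intro; ring. eapply D_eq. apply D_plus. apply D_id. apply D_const. ring. Qed.

Lemma dir0 (P : R -> R -> R) N l x : 0 < rad x ->
  derivable_pt_lim (fun t => P (px1 (shift x 0 t)) (px2 (shift x 0 t)) * Qf N l (shift x 0 t)) 0
   (P (px1 x) (px2 x) * QD N l (px0 x) (px1 x) (px2 x) 1 0 0).
Proof. intros Hx. destruct x as [[a0 a1] a2].
  apply (D_ext (fun t => P a1 a2 * Qf N l ((fun t => a0 + t) t, (fun _ => a1) t, (fun _ => a2) t))).
  { intro; reflexivity. }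
  eapply D_eq. apply D_mult. apply D_const.
  apply d_Q. apply D_shift.
  apply D_const. apply D_const. cbv beta. rewrite Rplus_0_r. exact Hx.
  cbv beta. rewrite Rplus_0_r. unfold QD. unfold px0, px1, px2; cbn [fst snd]. ring. Qed.

Lemma dir1 (P : R -> R -> R) dP N l x : 0 < rad x ->
  derivable_pt_lim (fun u => P u (px2 x)) (px1 x) dP ->
  derivable_pt_lim (fun t => P (px1 (shift x 1 t)) (px2 (shift x 1 t)) * Qf N l (shift x 1 t)) 0
   (dP * Qf N l x + P (px1 x) (px2 x) * QD N l (px0 x) (px1 x) (px2 x) 0 1 0).
Proof. intros Hx HP. destruct x as [[a0 a1] a2].
  apply (D_ext (fun t => P ((fun t => a1 + t) t) a2 * Qf N l ((fun _ => a0) t, (fun t => a1 + t) t, (fun _ => a2) t))).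
  { intro; reflexivity. }
  assert (Du : derivable_pt_lim (fun t => a1 + t) 0 1)
  by apply D_shift.
  eapply D_eq. apply D_mult.
  apply (D_comp (fun u => P u a2) (fun t => a1 + t)). apply Du. rewrite Rplus_0_r. apply HP.
  apply d_Q. apply D_const. apply Du. apply D_const. cbv beta. rewrite Rplus_0_r. exact Hx.
  cbv beta. rewrite Rplus_0_r. unfold QD. unfold px0, px1, px2; cbn [fst snd]. ring. Qed.

Lemma dir2 (P : R -> R -> R) dP N l x : 0 < rad x ->
  derivable_pt_lim (fun u => P (px1 x) u) (px2 x) dP ->
  derivable_pt_lim (fun t => P (px1 (shift x 2 t)) (px2 (shift x 2 t)) * Qf N l (shift x 2 t)) 0
   (dP * Qf N l x + P (px1 x) (px2 x) * QD N l (px0 x) (px1 x) (px2 x) 0 0 1).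
Proof. intros Hx HP. destruct x as [[a0 a1] a2].
  apply (D_ext (fun t => P a1 ((fun t => a2 + t) t) * Qf N l ((fun _ => a0) t, (fun _ => a1) t, (fun t => a2 + t) t))).
  { intro; reflexivity. }
  assert (Du : derivable_pt_lim (fun t => a2 + t) 0 1)
  by apply D_shift.
  eapply D_eq. apply D_mult.
  apply (D_comp (fun u => P a1 u) (fun t => a2 + t)). apply Du. rewrite Rplus_0_r. apply HP.
  apply d_Q. apply D_const. apply D_const. apply Du. cbv beta. rewrite Rplus_0_r. exact Hx.
  cbv beta. rewrite Rplus_0_r. unfold QD. unfold px0, px1, px2; cbn [fst snd]. ring. Qed.

Lemma Dbar_of (F : pt -> R) x W0 W1 W2 :
  derivable_pt_lim (fun t => F (shift x 0 t)) 0 W0 ->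
  derivable_pt_lim (fun t => F (shift x 1 t)) 0 W1 ->
  derivable_pt_lim (fun t => F (shift x 2 t)) 0 W2 ->
  has_Dbar (fun y => qR (F y)) x (mkQ W0 (- W1) (- W2) 0).
Proof. intros H0 H1 H2. exists (mkQ W0 0 0 0), (mkQ W1 0 0 0), (mkQ W2 0 0 0).
  unfold has_pderiv; simpl. repeat split; try apply D_const; auto.
  unfold qsub, qadd, qopp, qmul, e1, e2. simpl. f_equal; ring. Qed.

Lemma quat_ext a b : q0 a = q0 b -> q1 a = q1 b -> q2 a = q2 b -> q3 a = q3 b -> a = b.
Proof. destruct a, b; simpl; intros; subst; reflexivity. Qed.

Lemma rad_sph r th1 th2 : 0 < r ->
  rad (r * cos th1, r * sin th1 * cos th2, r * sin th1 * sin th2) = r.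
Proof. intros Hr. unfold rad, px0, px1, px2; cbn [fst snd].
  replace ((r * cos th1) ^ 2 + (r * sin th1 * cos th2) ^ 2 + (r * sin th1 * sin th2) ^ 2)
    with (r ^ 2 * ((sin th1)^2 * ((sin th2)^2 + (cos th2)^2) + (cos th1)^2)) by ring.
  pose proof (sin2_cos2 th1). pose proof (sin2_cos2 th2). unfold Rsqr in *.
  replace ((sin th2)^2 + (cos th2)^2) with 1 by (simpl; lra).
  replace ((sin th1)^2 * 1 + (cos th1)^2) with 1 by (simpl; lra).
  rewrite Rmult_1_r. apply sqrt_pow2. lra. Qed.

Lemma sqrt_sin th : 0 < th <= PI -> sqrt (1 - cos th ^ 2) = sin th.
Proof. intros H. pose proof (sin2_cos2 th). unfold Rsqr in *.
  replace (1 - cos th ^ 2) with (sin th ^ 2) by (simpl; lra).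
  apply sqrt_pow2. apply sin_ge_0; lra. Qed.

Lemma pred_pow k r : r <> 0 -> INR k * r ^ pred k = INR k * r ^ k / r.
Proof. intros H. destruct k. simpl. field; auto. simpl pred. rewrite <- tech_pow_Rmult. field; auto. Qed.

Lemma chebU_SS p c : chebUm1 (S (S p)) c = 2 * c * chebUm1 (S p) c - chebUm1 p c.
Proof. reflexivity. Qed.
Lemma chebT_SS p c : chebT (S (S p)) c = 2 * c * chebT (S p) c - chebT p c.
Proof. reflexivity. Qed.
Lemma chebU_SS' p c : chebUm1 (S (S p)) c = 2 * chebT (S p) c + chebUm1 p c.
Proof. pose proof (chebU_S (S p) c). rewrite chebU_SS in *. lra. Qed.
Lemma chebT_SS' p C S2 : C^2 + S2^2 = 1 -> chebT (S (S p)) C = chebT p C - 2 * S2^2 * chebUm1 (S p) C.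
Proof. intros H. pose proof (chebT_S (S p) C). rewrite chebT_SS in *.
  replace (1 - C^2) with (S2^2) in H0 by lra. lra. Qed.

Lemma Xm p k r th1 th2 : 0 < r -> 0 < th1 <= PI ->
  Xdag_at (p + k) (S p) (sph r th1 th2)
        (qscale (r ^ (p + k))
          (qadd (qR (INR ((p + k) + S p + 1) / 2 * Uharm (p + k) (S p) th1 th2))
          (qadd (qmul (qR (1 / 4 * Rpm (-1) (p + k) (S p) th1 th2)) e1)
                (qmul (qR (1 / 4 * Spm 1 (p + k) (S p) th1 th2)) e2)))).
Proof. intros Hr Hth. set (n := (p + k)%nat). unfold Xdag_at.
  set (x := sph r th1 th2).
  assert (Hx : 0 < rad x) by (unfold x, sph; rewrite rad_sph; auto).
  replace (fun y => qR (rU (S n) (S n) (S p) y)) with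
    (fun y => qR (Aq (S p) (px1 y) (px2 y) * Qf (S n) (S p) y))
    by (extensionality y; rewrite repU; reflexivity).
  eexists. split.
  { apply (Dbar_of (fun y => Aq (S p) (px1 y) (px2 y) * Qf (S n) (S p) y)).
    - apply (dir0 (Aq (S p))); auto.
    - apply (dir1 (Aq (S p))); auto. apply (proj1 (dA1 p _ _)).
    - apply (dir2 (Aq (S p))); auto. apply (proj1 (dA2 p _ _)). }
  apply quat_ext; unfold qscale, qsub, qopp, qmul, qR, qadd, e1, e2; cbn [q0 q1 q2 q3].
  all: unfold x, sph, Qf, QD, px0, px1, px2; cbn [fst snd]; rewrite !rad_sph by auto.
  all: unfold Rpm, Spm, Uharm, Vharm, assoc_legendre; rewrite !sqrt_sin by auto.
  all: replace (r * cos th1 / r) with (cos th1) by (field; lra).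
  all: replace (S n - S p)%nat with k by (unfold n; lia).
  all: replace (S p - 1)%nat with p by lia.
  all: rewrite !pred_pow by lra.
  all: set (c := cos th1); set (s := sin th1); set (C := cos th2); set (S2 := sin th2).
  all: assert (HCS : C^2 + S2^2 = 1) by (unfold C, S2; pose proof (sin2_cos2 th2); unfold Rsqr in *; simpl; lra).
  all: assert (Hcs : 1 - c^2 = s^2) by (unfold c, s; pose proof (sin2_cos2 th1); unfold Rsqr in *; simpl; lra).
  all: destruct (AB_polar (S p) (r * s) C S2 HCS) as [HA1 HB1].
  all: destruct (AB_polar p (r * s) C S2 HCS) as [HA0 HB0].
  all: rewrite ?HA1, ?HA0, ?HB1, ?HB0.
  all: rewrite ?chebT_SS, ?chebU_SS'.
  all: set (G0 := g (S n) (S p) c); set (G1 := g (S n) (S (S p)) c).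
  all: pose proof (Id1 n (S p) c) as I1; pose proof (Id2 n (S p) c) as I2; pose proof (Id3 n p c) as I3.
  all: fold G0 G1 in I1, I2, I3; rewrite Hcs in I3.
  all: unfold n in *; repeat (rewrite S_INR in * || rewrite plus_INR in *); change (INR 0) with 0 in *.
  all: assert (0 <= INR p) by apply pos_INR; assert (0 <= INR k) by apply pos_INR.
  all: assert (Egl : g (p + k) (S p) c = ((INR k) * c * G0 + (1 - c^2) * G1) / (INR p + INR k + 1 + (INR p + 1)))
         by (apply (Rmult_eq_reg_l (INR p + INR k + 1 + (INR p + 1))); [field_simplify; lra | lra]).
  all: assert (Egu : g (p + k) (S (S p)) c = c * G1 - INR k * G0) by lra.
  all: assert (Egd : g (p + k) p c = (2 * (INR p + 1) * G0 - s^2 * g (p + k) (S (S p)) c) /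
          ((INR p + INR k + 1 + INR p + 1) * (INR p + INR k + 1 + INR p)))
         by (apply (Rmult_eq_reg_l ((INR p + INR k + 1 + INR p + 1) * (INR p + INR k + 1 + INR p))); [field_simplify; [lra|nra] | nra]).
  all: rewrite Egl, Egd, Egu.
  all: rewrite !Rpow_mult_distr, !pow_add; rewrite <- !tech_pow_Rmult.
  all: field; split; [lra | nra].
Qed.

Lemma Ym p k r th1 th2 : 0 < r -> 0 < th1 <= PI ->
  Ydag_at (p + k) (S p) (sph r th1 th2)
        (qscale (r ^ (p + k))
          (qadd (qR (INR ((p + k) + S p + 1) / 2 * Vharm (p + k) (S p) th1 th2))
          (qsub (qmul (qR (1 / 4 * Spm (-1) (p + k) (S p) th1 th2)) e1)
                (qmul (qR (1 / 4 * Rpm 1 (p + k) (S p) th1 th2)) e2)))).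
Proof. intros Hr Hth. set (n := (p + k)%nat). unfold Ydag_at.
  set (x := sph r th1 th2).
  assert (Hx : 0 < rad x) by (unfold x, sph; rewrite rad_sph; auto).
  replace (fun y => qR (rV (S n) (S n) (S p) y)) with
    (fun y => qR (Bq (S p) (px1 y) (px2 y) * Qf (S n) (S p) y))
    by (extensionality y; rewrite repV; reflexivity).
  eexists. split.
  { apply (Dbar_of (fun y => Bq (S p) (px1 y) (px2 y) * Qf (S n) (S p) y)).
    - apply (dir0 (Bq (S p))); auto.
    - apply (dir1 (Bq (S p))); auto. apply (proj2 (dA1 p _ _)).
    - apply (dir2 (Bq (S p))); auto. apply (proj2 (dA2 p _ _)). }
  apply quat_ext; unfold qscale, qsub, qopp, qmul, qR, qadd, e1, e2; cbn [q0 q1 q2 q3].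
  all: unfold x, sph, Qf, QD, px0, px1, px2; cbn [fst snd]; rewrite !rad_sph by auto.
  all: unfold Rpm, Spm, Uharm, Vharm, assoc_legendre; rewrite !sqrt_sin by auto.
  all: replace (r * cos th1 / r) with (cos th1) by (field; lra).
  all: replace (S n - S p)%nat with k by (unfold n; lia).
  all: replace (S p - 1)%nat with p by lia.
  all: rewrite !pred_pow by lra.
  all: set (c := cos th1); set (s := sin th1); set (C := cos th2); set (S2 := sin th2).
  all: assert (HCS : C^2 + S2^2 = 1) by (unfold C, S2; pose proof (sin2_cos2 th2); unfold Rsqr in *; simpl; lra).
  all: assert (Hcs : 1 - c^2 = s^2) by (unfold c, s; pose proof (sin2_cos2 th1); unfold Rsqr in *; simpl; lra).
  all: destruct (AB_polar (S p) (r * s) C S2 HCS) as [HA1 HB1].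
  all: destruct (AB_polar p (r * s) C S2 HCS) as [HA0 HB0].
  all: rewrite ?HA1, ?HA0, ?HB1, ?HB0.
  all: rewrite ?chebU_SS, ?(chebT_SS' p C S2 HCS).
  all: set (G0 := g (S n) (S p) c); set (G1 := g (S n) (S (S p)) c).
  all: pose proof (Id1 n (S p) c) as I1; pose proof (Id2 n (S p) c) as I2; pose proof (Id3 n p c) as I3.
  all: fold G0 G1 in I1, I2, I3; rewrite Hcs in I3.
  all: unfold n in *; repeat (rewrite S_INR in * || rewrite plus_INR in *); change (INR 0) with 0 in *.
  all: assert (0 <= INR p) by apply pos_INR; assert (0 <= INR k) by apply pos_INR.
  all: assert (Egl : g (p + k) (S p) c = ((INR k) * c * G0 + (1 - c^2) * G1) / (INR p + INR k + 1 + (INR p + 1)))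
         by (apply (Rmult_eq_reg_l (INR p + INR k + 1 + (INR p + 1))); [field_simplify; lra | lra]).
  all: assert (Egu : g (p + k) (S (S p)) c = c * G1 - INR k * G0) by lra.
  all: assert (Egd : g (p + k) p c = (2 * (INR p + 1) * G0 - s^2 * g (p + k) (S (S p)) c) /
          ((INR p + INR k + 1 + INR p + 1) * (INR p + INR k + 1 + INR p)))
         by (apply (Rmult_eq_reg_l ((INR p + INR k + 1 + INR p + 1) * (INR p + INR k + 1 + INR p))); [field_simplify; [lra|nra] | nra]).
  all: rewrite Egl, Egd, Egu.
  all: rewrite !Rpow_mult_distr, !pow_add; rewrite <- !tech_pow_Rmult.
  all: field; split; [lra | nra].
Qed.

Lemma dAq0_1 a b : derivable_pt_lim (fun u => Aq 0 u b) a 0.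
Proof. apply (D_ext (fun _ => 1)). intro; reflexivity. apply D_const. Qed.
Lemma dAq0_2 a b : derivable_pt_lim (fun u => Aq 0 a u) b 0.
Proof. apply (D_ext (fun _ => 1)). intro; reflexivity. apply D_const. Qed.

Lemma X0 n r th1 th2 : 0 < r -> 0 < th1 <= PI ->
    Xdag_at n 0 (sph r th1 th2)
      (qscale (r ^ n)
        (qadd (qR (INR (n + 1) / 2 * Uharm n 0 th1 th2))
        (qadd (qmul (qR (1 / 2 * Uharm n 1 th1 th2)) e1)
              (qmul (qR (1 / 2 * Vharm n 1 th1 th2)) e2)))).
Proof. intros Hr Hth. unfold Xdag_at.
  set (x := sph r th1 th2).
  assert (Hx : 0 < rad x) by (unfold x, sph; rewrite rad_sph; auto).
  replace (fun y => qR (rU (S n) (S n) 0 y)) with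
    (fun y => qR (Aq 0 (px1 y) (px2 y) * Qf (S n) 0 y))
    by (extensionality y; rewrite repU; reflexivity).
  eexists. split.
  { apply (Dbar_of (fun y => Aq 0 (px1 y) (px2 y) * Qf (S n) 0 y)).
    - apply (dir0 (Aq 0)); auto.
    - apply (dir1 (Aq 0)); auto. apply dAq0_1.
    - apply (dir2 (Aq 0)); auto. apply dAq0_2. }
  apply quat_ext; unfold qscale, qsub, qopp, qmul, qR, qadd, e1, e2; cbn [q0 q1 q2 q3].
  all: unfold x, sph, Qf, QD, px0, px1, px2; cbn [fst snd]; rewrite !rad_sph by auto.
  all: unfold Uharm, Vharm, assoc_legendre; rewrite !sqrt_sin by auto.
  all: replace (r * cos th1 / r) with (cos th1) by (field; lra).
  all: rewrite !Nat.sub_0_r.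
  all: rewrite !pred_pow by lra.
  all: set (c := cos th1); set (s := sin th1); set (C := cos th2); set (S2 := sin th2).
  all: change (Aq 0 (r * s * C) (r * s * S2)) with 1.
  all: cbn [chebT chebUm1].
  all: set (G0 := g (S n) 0 c); set (G1 := g (S n) 1 c).
  all: pose proof (Id1 n 0 c) as I1; pose proof (Id2 n 0 c) as I2.
  all: fold G0 G1 in I1, I2.
  all: repeat (rewrite S_INR in * || rewrite plus_INR in *); change (INR 0) with 0 in *.
  all: assert (0 <= INR n) by apply pos_INR.
  all: assert (Egl : g n 0 c = ((INR n + 1) * c * G0 + (1 - c^2) * G1) / (INR n + 1))
         by (apply (Rmult_eq_reg_l (INR n + 1)); [field_simplify; lra | lra]).
  all: assert (Egu : g n 1 c = c * G1 - (INR n + 1) * G0) by lra.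
  all: rewrite ?Egl, ?Egu.
  all: rewrite <- !tech_pow_Rmult.
  all: field; lra.
Qed.

Theorem proposition1 :
  forall (n : nat) (r th1 th2 : R),
    0 < r -> 0 < th1 <= PI -> 0 < th2 <= 2 * PI ->
    Xdag_at n 0 (sph r th1 th2)
      (qscale (r ^ n)
        (qadd (qR (INR (n + 1) / 2 * Uharm n 0 th1 th2))
        (qadd (qmul (qR (1 / 2 * Uharm n 1 th1 th2)) e1)
              (qmul (qR (1 / 2 * Vharm n 1 th1 th2)) e2)))) /\
    (forall m : nat, (1 <= m <= n + 1)%nat ->
      Xdag_at n m (sph r th1 th2)
        (qscale (r ^ n)
          (qadd (qR (INR (n + m + 1) / 2 * Uharm n m th1 th2))
          (qadd (qmul (qR (1 / 4 * Rpm (-1) n m th1 th2)) e1)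
                (qmul (qR (1 / 4 * Spm 1 n m th1 th2)) e2)))) /\
      Ydag_at n m (sph r th1 th2)
        (qscale (r ^ n)
          (qadd (qR (INR (n + m + 1) / 2 * Vharm n m th1 th2))
          (qsub (qmul (qR (1 / 4 * Spm (-1) n m th1 th2)) e1)
                (qmul (qR (1 / 4 * Rpm 1 n m th1 th2)) e2))))).
Proof.
  intros n r th1 th2 Hr Hth1 Hth2. split.
  - apply X0; auto.
  - intros m Hm. destruct m as [|p]; [lia|].
    replace n with (p + (n - p))%nat by lia. split.
    + apply Xm; auto.
    + apply Ym; auto.
Qed.
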